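(* Let $M$ be a matroid on a finite set $E$ with $r(M)>0$. If $M$ is a unique expansion matroid, then its dual $M^*$ is a unique exchange matroid.
   Context: For a matroid $M=(E,\mathcal{I})$: $\mathcal{I}(M)$ its independent sets, $\mathcal{B}(M)$ its bases, $r(M)$ the size of a base. For $r(M)>0$, $s(M)=\{A\in\mathcal{I}(M): |A|=r(M)-1\}$. $M$ is a unique expansion matroid if for every $B\in\mathcal{B}(M)$ and every $A\in s(M)$, whenever $e_1,e_2\in B$ satisfy $A\cup\{e_1\}\in\mathcal{B}(M)$ and $A\cup\{e_2\}\in\mathcal{B}(M)$, then $e_1=e_2$. The dual $M^*$ is the matroid on $E$ with bases $\{E-B: B\in\mathcal{B}(M)\}$. A matroid $N$ is a unique exchange matroid if for all $B_1,B_2\in\mathcal{B}(N)$, whenever $x\in B_1-B_2$, $y_1,y_2\in B_2-B_1$, $(B_1-\{x\})\cup\{y_1\}\in\mathcal{B}(N)$ and $(B_1-\{x\})\cup\{y_2\}\in\mathcal{B}(N)$, then $y_1=y_2$. *)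

(* Defs.v *)
From mathcomp Require Import all_boot.
Set Implicit Arguments. Unset Strict Implicit. Unset Printing Implicit Defensive.

Record matroid (E : finType) := Matroid {
  indep : {set {set E}};
  indep_set0 : set0 \in indep;
  indep_subset : forall A B : {set E}, B \in indep -> A \subset B -> A \in indep;
  indep_aug : forall A B : {set E}, A \in indep -> B \in indep -> #|A| < #|B| ->
      exists2 x, x \in B :\: A & x |: A \in indep
}.

Section MatroidDefs.
Variables (E : finType) (M : matroid E).

Definition bases : {set {set E}} :=
  [set B in indep M | [forall A in indep M, (B \subset A) ==> (A == B)]].

Definition rank_matroid : nat := \max_(A in indep M) #|A|.

Definition s_sets : {set {set E}} :=
  [set A in indep M | #|A| == rank_matroid.-1].

Definition unique_expansion : Prop :=
  forall B A : {set E}, B \in bases -> A \in s_sets ->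
  forall e1 e2 : E, e1 \in B -> e2 \in B ->
    e1 |: A \in bases -> e2 |: A \in bases -> e1 = e2.

Definition dual_bases : {set {set E}} := [set ~: B | B in bases].

End MatroidDefs.

Definition unique_exchange_bases (E : finType) (BB : {set {set E}}) : Prop :=
  forall B1 B2 : {set E}, B1 \in BB -> B2 \in BB ->
  forall x y1 y2 : E, x \in B1 :\: B2 -> y1 \in B2 :\: B1 -> y2 \in B2 :\: B1 ->
    y1 |: (B1 :\ x) \in BB -> y2 |: (B1 :\ x) \in BB -> y1 = y2.

Definition unique_exchange (E : finType) (N : matroid E) : Prop :=
  unique_exchange_bases (bases N).

(* N is the dual matroid of M: its bases are the complements of the bases of M.
   (A matroid is determined by its bases, so this characterizes M^* uniquely.) *)
Definition is_dual (E : finType) (M N : matroid E) : Prop := bases N = dual_bases M.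

(* Main.v *)
Require Import Defs.
From mathcomp Require Import all_boot.

Section Aux.
Variables (E : finType) (M : matroid E).

Lemma base_indep B : B \in bases M -> B \in indep M.
Proof. by rewrite inE => /andP[]. Qed.

Lemma base_card B : B \in bases M -> #|B| = rank_matroid M.
Proof.
move=> HB; have HI := @base_indep B HB.
have Hle : #|B| <= rank_matroid M by exact: (@leq_bigmax_cond _ (fun A : {set E} => A \in indep M) (fun A => #|A|) B HI).
have [A HA HAm] : exists2 A, A \in indep M & #|A| = rank_matroid M.
  rewrite /rank_matroid; case: (@eq_bigmax_cond _ (fun A : {set E} => A \in indep M) (fun A => #|A|)).
    by apply/card_gt0P; exists B.
  by move=> A HA ->; exists A.
apply/eqP; rewrite eqn_leq Hle /= leqNgt; apply/negP => Hlt.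
rewrite -HAm in Hlt.
have [x Hx HxI] := indep_aug HI HA Hlt.
move: HB; rewrite inE => /andP[_ /forallP /(_ (x |: B))].
rewrite HxI /= subsetUr /= => /eqP Heq.
move: Hx; rewrite inE => /andP[HxB _]; move: HxB.
by rewrite -Heq setU11.
Qed.

Lemma dual_mem X : X \in dual_bases M -> ~: X \in bases M.
Proof. by move=> /imsetP[B HB ->]; rewrite setCK. Qed.
End Aux.

Lemma compl_exch (E : finType) (B : {set E}) x y : x != y ->
  ~: (y |: (B :\ x)) = (x |: ~: B) :\ y.
Proof.
move=> Hxy; apply/setP => z; rewrite !inE.
case: (eqVneq z y) => [->|_] //=.
by case: (z == x); case: (z \in B).
Qed.

Lemma pair_rem (E : finType) (S : {set E}) y1 y2 : y1 \in S -> y1 != y2 ->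
  y1 |: (S :\: [set y1; y2]) = S :\ y2.
Proof.
move=> H1 H12; apply/setP => z; rewrite !inE.
by case: (eqVneq z y1) => [->|_] /=; rewrite ?H1 ?H12.
Qed.

Theorem theorem11 (E : finType) (M Mstar : matroid E) :
  is_dual M Mstar -> 0 < rank_matroid M -> unique_expansion M ->
  unique_exchange Mstar.
Proof.
move=> Hd _ Hue B1 B2 HB1 HB2 x y1 y2 Hx Hy1 Hy2 H1 H2.
rewrite /is_dual in Hd; rewrite Hd in HB1 HB2 H1 H2.
move: (@dual_mem _ M _ HB1) (@dual_mem _ M _ H1) (@dual_mem _ M _ H2) => C1 D1 D2.
move: Hx Hy1 Hy2; rewrite !inE => /andP[_ HxB1] /andP[Hy1B1 _] /andP[Hy2B1 _].
have Hxy1 : x != y1 by apply/eqP => E1; move: Hy1B1; rewrite -E1 HxB1.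
have Hxy2 : x != y2 by apply/eqP => E1; move: Hy2B1; rewrite -E1 HxB1.
rewrite compl_exch // in D1; rewrite compl_exch // in D2.
apply/eqP/negPn/negP => H12.
set S := x |: ~: B1.
have Hy1S : y1 \in S by rewrite !inE Hy1B1 orbT.
have Hy2S : y2 \in S by rewrite !inE Hy2B1 orbT.
have H21 : y2 != y1 by rewrite eq_sym.
set A := S :\: [set y1; y2].
have E1 : y1 |: A = S :\ y2 by apply: pair_rem.
have E2 : y2 |: A = S :\ y1.
  rewrite /A (_ : [set y1; y2] = [set y2; y1]); first exact: pair_rem.
  by rewrite setUC.
apply: (negP H12); apply/eqP; apply: (Hue (~: B1) A) => //.
- rewrite inE; apply/andP; split.
    by apply: (indep_subset (@base_indep _ M _ D2)); rewrite -E1 subsetUr.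
  rewrite -(@base_card _ M _ D2) -E1 cardsU1 /A !inE eqxx /=.
  by [].
- by rewrite inE.
- by rewrite inE.
- by rewrite E1.
- by rewrite E2.
Qed.
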